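(* Consider the replace-after-random-time process with failure rate $\lambda>0$ and replacement-time density $f$. If there exist $\epsilon>0$ and $\delta>0$ such that $f(r)>\epsilon$ for all $0<r<\delta$, then $E[N(t)]=\infty$ for every $t>0$.
   Context: Let $X_1,X_2,\ldots$ be independent random variables, each exponentially distributed with rate $\lambda>0$ (density $\lambda e^{-\lambda x}$ for $x>0$). Let $R$ be a random variable, independent of $X_1,X_2,\ldots$, with an absolutely continuous distribution on $(0,\infty)$ with probability density function $f$. For $t\ge0$ define $N(t)=\max\{n\ge0:\sum_{k=1}^n\min(X_k,R)\le t\}$; $\{N(t)\}$ is called the replace-after-random-time (RaRT) process. *)

(* Defs.v *)
From HB Require Import structures.
From mathcomp Require Import all_boot all_order all_algebra.
From mathcomp Require Import all_classical all_reals all_analysis.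
From mathcomp Require Import exponential_distribution.
Set Implicit Arguments. Unset Strict Implicit. Unset Printing Implicit Defensive.
Import Order.TTheory GRing.Theory Num.Theory.
Import numFieldNormedType.Exports.
Local Open Scope classical_set_scope.
Local Open Scope ring_scope.

Definition mutually_independent {d} {T : measurableType d} {R : realType}
  (P : probability T R) (I : eqType) (Y : I -> T -> R) : Prop :=
  forall (s : seq I) (B : I -> set R), uniq s ->
    (forall i, measurable (B i)) ->
    P (\bigcap_(i in [set j | j \in s]) (Y i @^-1` B i)) =
    (\prod_(i <- s) P (Y i @^-1` B i))%E.

(* The family (R, X_1, X_2, ...) indexed by option nat:
   None |-> R,  Some k |-> X_(k+1). *)
Definition rart_family {T : Type} {R : realType}
  (X : nat -> T -> R) (Rr : T -> R) : option nat -> T -> R :=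
  fun o => match o with None => Rr | Some k => X k end.

(* Partial sums S_n = sum_{k=1}^n min(X_k, R); X is 0-indexed here. *)
Definition rart_sum {T : Type} {R : realType}
  (X : nat -> T -> R) (Rr : T -> R) (n : nat) (w : T) : R :=
  \sum_(k < n) Num.min (X k w) (Rr w).

(* N(t) = max{ n >= 0 : S_n <= t }, as an extended real (supremum, +oo if
   unbounded). *)
Definition rart_N {T : Type} {R : realType}
  (X : nat -> T -> R) (Rr : T -> R) (t : R) (w : T) : \bar R :=
  ereal_sup [set (n%:R)%:E | n in [set n : nat | rart_sum X Rr n w <= t]].

(* Main.v *)
Require Import Defs.
From HB Require Import structures.
From mathcomp Require Import all_boot all_order all_algebra.
From mathcomp Require Import all_classical all_reals all_analysis.
From mathcomp Require Import exponential_distribution.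
Import Order.TTheory GRing.Theory Num.Theory.
Import numFieldNormedType.Exports.
Local Open Scope classical_set_scope.
Local Open Scope ring_scope.
Lemma le_int_nm d (T : measurableType d) (R : realType) (mu : {measure set T -> \bar R})
  (f g : T -> \bar R) : (forall x, (0 <= f x)%E) -> (forall x, (f x <= g x)%E) ->
  (\int[mu]_x f x <= \int[mu]_x g x)%E.
Proof.
move=> f0 fg; rewrite !ge0_integralTE //; last first.
  by move=> x; exact: le_trans (f0 x) (fg x).
apply: ereal_sup_le => _ [h hf <-]; exists h => // x; exact: le_trans (hf x) (fg x).
Qed.

Lemma N_ge (T : Type) (R : realType) (X : nat -> T -> R) (Rr : T -> R) t w n :
  rart_sum X Rr n w <= t -> ((n%:R)%:E <= rart_N X Rr t w)%E.
Proof. by move=> h; apply: ereal_sup_ubound; exists n. Qed.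

Lemma harm_unb (R : realType) (K : R) : exists M, K < \sum_(n < M) harmonic n.
Proof.
apply/not_existsP => H; apply: (@dvg_harmonic R); apply: nondecreasing_is_cvgn.
  apply/nondecreasing_seqP => n; rewrite /series /= big_nat_recr //=.
  by rewrite lerDl harmonic_ge0.
exists K => _ [M _ <-]; rewrite /series /=; have := H M; rewrite big_mkord.
by move/negP; rewrite -leNgt.
Qed.

Lemma pointwise (T : Type) (R : realType) (X : nat -> T -> R) (Rr : T -> R)
  (t a : R) (A : nat -> set T) :
  0 <= t -> a <= t ->
  (forall n w, A n w -> 0 < Rr w /\ Rr w <= a / (n.+1)%:R) ->
  forall M w, (\sum_(n < M) (\1_(A n) w)%:E <= rart_N X Rr t w)%E.
Proof.
move=> t0 hat hA M w; elim: M => [|M IH].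
  rewrite big_ord0; have := @N_ge T R X Rr t w 0%N.
  by apply; rewrite /rart_sum big_ord0.
rewrite big_ord_recr /=.
have [Aw|nAw] := boolP (w \in A M); last first.
  by rewrite indicE (negbTE nAw) adde0.
have := hA M w (set_mem Aw) => -[R0 Ra].
apply: (@le_trans _ _ ((M.+1%:R)%:E)).
  rewrite -natr1 EFinD leeD //; last by rewrite indicE Aw.
  apply: (@le_trans _ _ (\sum_(n < M) 1%E)).
    by apply: lee_sum => i _; rewrite indicE lee_fin; case: (_ \in _).
  by rewrite sumEFin sumr_const card_ord.
apply: N_ge; rewrite /rart_sum.
apply: (@le_trans _ _ (\sum_(k < M.+1) Rr w)).
  by apply: ler_sum => k _; rewrite ge_min lexx orbT.
rewrite sumr_const card_ord -mulr_natr.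
apply: (le_trans _ hat).
have -> : a = a / M.+1%:R * M.+1%:R by rewrite divfK ?pnatr_eq0.
by rewrite ler_wpM2r.
Qed.

Lemma dens_lb (R : realType) (f : R -> R) (eps delta b : R) :
  measurable_fun setT f -> 0 < eps -> 0 < b -> b < delta ->
  (forall r, 0 < r < delta -> eps < f r) ->
  ((eps * b)%:E <= \int[lebesgue_measure]_(x in `]0%R, b] `&` [set x : R | (0 < x)%R]) (f x)%:E)%E.
Proof.
move=> mf e0 b0 bd hf.
have -> : `]0%R, b] `&` [set x : R | (0 < x)%R] = `]0%R, b]%classic.
  apply/seteqP; split => x /=; first by case.
  by move=> hx; split => //; move: hx; rewrite in_itv /= => /andP[].
have mD : measurable (`]0%R, b]%classic : set R) by [].
apply: (@le_trans _ _ (\int[lebesgue_measure]_(x in `]0%R, b]) (cst eps%:E x))%E).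
  rewrite integral_cst //; have := @lebesgue_measure_itv R `]0%R, b]; rewrite /= lte_fin b0 /= sube0 => ->; rewrite -EFinM.
  by rewrite mulrC.
apply: ge0_le_integral => //.
- by move=> x _; rewrite lee_fin ltW.
- apply/measurable_realfun.measurable_EFinP; exact: measurable_funTS.
- move=> x; rewrite /= in_itv /= => /andP[x0 xb]; rewrite lee_fin ltW //.
  by apply: hf; rewrite x0 /= (le_lt_trans xb bd).
Qed.

From mathcomp Require Import lra.

Theorem mainTheorem10 (d : measure_display) (T : measurableType d)
  (R : realType) (P : probability T R)
  (lambda : R) (X : nat -> T -> R) (Rr : T -> R) (f : R -> R) :
  0 < lambda ->
  (forall k, measurable_fun setT (X k)) ->
  (forall k (B : set R), measurable B ->
     P (X k @^-1` B) = exponential_prob lambda B) ->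
  measurable_fun setT Rr ->
  measurable_fun setT f ->
  (forall r, 0 < r -> 0 <= f r) ->
  (forall B : set R, measurable B ->
     P (Rr @^-1` B) =
     (\int[lebesgue_measure]_(x in B `&` [set x : R | (0 < x)%R]) (f x)%:E)%E) ->
  mutually_independent P (rart_family X Rr) ->
  (exists eps delta : R, 0 < eps /\ 0 < delta /\
     forall r, 0 < r < delta -> eps < f r) ->
  forall t : R, 0 < t ->
    (\int[P]_w rart_N X Rr t w = +oo)%E.
Proof.
move=> _ _ _ mRr mf _ PR _ [eps [delta [e0 [d0 hf]]]] t t0.
set m := Num.min t delta.
have m0 : 0 < m by rewrite lt_min t0 d0.
have mt : m <= t by rewrite ge_min lexx.
have md : m <= delta by rewrite ge_min lexx orbT.
set a := m / 2.
have a0 : 0 < a by rewrite /a; lra.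
have hat : a <= t by rewrite /a; lra.
have ad : a < delta by rewrite /a; lra.
have bpos n : 0 < a / n.+1%:R by rewrite divr_gt0.
have ble n : a / n.+1%:R <= a.
  rewrite ler_pdivrMr ?ltr0n //; apply: ler_peMr; [exact: ltW | by rewrite ler1n].
pose A n := Rr @^-1` (`]0%R, a / n.+1%:R] : set R).
have mA n : measurable (A n).
  by have := mRr measurableT _ (measurable_itv `]0%R, a / n.+1%:R]); rewrite setTI.
have PA n : ((eps * (a / n.+1%:R))%:E <= P (A n))%E.
  rewrite /A PR //; apply: (@dens_lb _ f eps delta) => //; exact: le_lt_trans (ble n) ad.
have hA n w : A n w -> 0 < Rr w /\ Rr w <= a / n.+1%:R.
  by rewrite /A /= in_itv /= => /andP[].
have key M : ((eps * a * \sum_(n < M) harmonic n)%:E <= \int[P]_w rart_N X Rr t w)%E.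
  apply: (@le_trans _ _ (\int[P]_w (\sum_(n < M) (\1_(A n) w)%:E))%E); last first.
    apply: le_int_nm; last exact: pointwise (ltW t0) hat hA M.
    by move=> w; apply: sume_ge0 => n _; rewrite lee_fin indicE; case: (_ \in _).
  rewrite ge0_integral_sum //; last first.
    by move=> n; apply/measurable_realfun.measurable_EFinP; exact: measurable_realfun.measurable_indic.
  rewrite mulr_sumr. rewrite -sumEFin. apply: lee_sum => n _.
  rewrite integral_indic // setIT; apply: le_trans (PA n).
  by rewrite lee_fin /= -mulrA.
case E : (\int[P]_w rart_N X Rr t w)%E => [r| |] //; exfalso.
- have [M hM] := @harm_unb R (r / (eps * a)).
  have := key M; rewrite E lee_fin -ler_pdivlMl ?mulr_gt0 // mulrC => /(lt_le_trans hM).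
  by rewrite ltxx.
- by have := key 0%N; rewrite E.
Qed.
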